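(* Fix a prior $\mu$ in the relative interior of $\Delta$ and suppose the updating rule respects the Blackwell order for $\mu$ and $\varphi=\varphi^{\mu}$ is continuous on $\Delta$. (a) If there are at least three states ($n\ge3$), then either there is $x^*\in\Delta$ with $\varphi(x)=x^*$ for all $x\in\Delta$, or $\varphi(x)=x$ for all $x\in\Delta$. (b) If there are two states ($n=2$), then the updating rule is occasionally coarse for $\mu$ with $\varphi(0)=a$ and $\varphi(1)=b$, i.e. there exist $0\le a\le b\le 1$ with $\varphi(x)=a$ for $x\in[0,a)$, $\varphi(x)=x$ for $x\in[a,b]$, and $\varphi(x)=b$ for $x\in(b,1]$.
   Context: Let $\Theta$ be a finite set of states, $|\Theta|=n\ge2$, and $\Delta=\Delta(\Theta)$ the simplex of beliefs, viewed as a subset of $\mathbb{R}^{n-1}$ with the Euclidean metric; for $n=2$, $\Theta=\{0,1\}$ and a belief is identified with the probability of state $1$, so $\Delta=[0,1]$. An experiment $\pi:\Theta\to\Delta(S)$ ($S$ finite) with prior $\mu$ induces the Bayesian distribution over posteriors $\rho_B$, a finitely supported distribution on $\Delta$ with mean $\mu$ (every such distribution arises from some experiment). Blackwell order: $\pi\succeq\pi'$ iff $\rho_B'$ is a mean-preserving contraction of $\rho_B$. An updating rule is given, for each prior $\mu$, by a distortion function $\varphi^{\mu}:\Delta\to\Delta$: when the Bayesian posterior is $x$, the decision maker holds belief $\varphi^{\mu}(x)$. For a compact action set $A$, continuous $u:A\times\Theta\to\mathbb{R}$, and consistent choice $a^*:\Delta\to A$ (i.e. $a^*(y)\in\arg\max_{a}\mathbb{E}_y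 u(a,\theta)$ for all $y$), let $W(x)=\mathbb{E}_x u(a^*(\varphi^{\mu}(x)),\theta)$. The rule respects the Blackwell order for $\mu$ if for all such $A,u,a^*$ and all $\pi\succeq\pi'$, $\mathbb{E}_{\rho_B}W\ge\mathbb{E}_{\rho_B'}W$. For $n=2$, occasionally coarse means: there exist $0\le a\le b\le1$ with $\varphi(x)=a$ for $x\in(0,a)$, $\varphi(x)=b$ for $x\in(b,1)$, $\varphi(x)=x$ for $x\in[a,b]$, $\varphi(0)\le a$, $\varphi(1)\ge b$. *)

(* Defs.v *)
From HB Require Import structures.
From mathcomp Require Import all_boot all_order all_algebra.
From mathcomp Require Import all_classical all_reals all_analysis.
Set Implicit Arguments. Unset Strict Implicit. Unset Printing Implicit Defensive.
Import Order.TTheory GRing.Theory Num.Theory.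
Import numFieldNormedType.Exports.
Local Open Scope classical_set_scope.
Local Open Scope ring_scope.

(* States: Theta = 'I_n.  Beliefs: row vectors 'rV[R]_n lying in the simplex.
   The topology on 'rV[R]_n is the (max-)norm topology, which coincides with
   the Euclidean one. *)

Definition simplex (R : realType) (n : nat) : set 'rV[R]_n :=
  [set x | (forall i, 0 <= x ord0 i) /\ \sum_i x ord0 i = 1].
Arguments simplex {R} n.

Definition rel_interior (R : realType) (n : nat) : set 'rV[R]_n :=
  [set x | simplex n x /\ forall i, 0 < x ord0 i].
Arguments rel_interior {R} n.

Definition experiment (R : realType) (n m : nat) (pi : 'I_n -> 'I_m -> R) :=
  (forall th s, 0 <= pi th s) /\ (forall th, \sum_s pi th s = 1).

(* Bayesian distribution over posteriors rho_B induced by (mu, pi):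
   signal s has probability sigprob and posterior post
   (post is irrelevant, and set by MathComp's x/0 = 0, when sigprob = 0). *)
Definition sigprob (R : realType) (n m : nat) (mu : 'rV[R]_n)
  (pi : 'I_n -> 'I_m -> R) (s : 'I_m) : R :=
  \sum_th mu ord0 th * pi th s.

Definition post (R : realType) (n m : nat) (mu : 'rV[R]_n)
  (pi : 'I_n -> 'I_m -> R) (s : 'I_m) : 'rV[R]_n :=
  \row_th (mu ord0 th * pi th s / sigprob mu pi s).

(* The finitely supported distribution (q_j, y_j)_j is a mean-preserving
   contraction of (p_i, x_i)_i : there is a coupling w with marginals p, q
   such that the conditional mean of x given y_j is y_j. *)
Definition mpc (R : realType) (n m m' : nat)
  (p : 'I_m -> R) (x : 'I_m -> 'rV[R]_n)
  (q : 'I_m' -> R) (y : 'I_m' -> 'rV[R]_n) : Prop :=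
  exists w : 'I_m -> 'I_m' -> R,
    [/\ forall i j, 0 <= w i j,
        forall i, \sum_j w i j = p i,
        forall j, \sum_i w i j = q j &
        forall j, \sum_i w i j *: x i = q j *: y j].

Definition blackwell_ge (R : realType) (n m m' : nat) (mu : 'rV[R]_n)
  (pi : 'I_n -> 'I_m -> R) (pi' : 'I_n -> 'I_m' -> R) : Prop :=
  mpc (sigprob mu pi) (post mu pi) (sigprob mu pi') (post mu pi').

Definition exp_util (R : realType) (n : nat) (V : Type) (u : V -> 'I_n -> R)
  (y : 'rV[R]_n) (a : V) : R := \sum_th y ord0 th * u a th.

(* A decision problem: compact (nonempty, by consistency) action set A in a
   normed space V (every compact metric space embeds isometrically in one),
   payoff u continuous on A x Theta (Theta finite discrete, so: continuous in
   the action for each state), and consistent choice astar. *)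
Definition consistent_choice (R : realType) (n : nat) (V : normedModType R)
  (A : set V) (u : V -> 'I_n -> R) (astar : 'rV[R]_n -> V) : Prop :=
  forall y, simplex n y ->
    A (astar y) /\ forall a, A a -> exp_util u y a <= exp_util u y (astar y).

Definition Wval (R : realType) (n : nat) (V : Type) (u : V -> 'I_n -> R)
  (astar : 'rV[R]_n -> V) (phi : 'rV[R]_n -> 'rV[R]_n) (x : 'rV[R]_n) : R :=
  exp_util u x (astar (phi x)).

Definition exp_W (R : realType) (n m : nat) (V : Type) (u : V -> 'I_n -> R)
  (astar : 'rV[R]_n -> V) (phi : 'rV[R]_n -> 'rV[R]_n)
  (mu : 'rV[R]_n) (pi : 'I_n -> 'I_m -> R) : R :=
  \sum_s sigprob mu pi s * Wval u astar phi (post mu pi s).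

Definition respects_blackwell (R : realType) (n : nat) (mu : 'rV[R]_n)
  (phi : 'rV[R]_n -> 'rV[R]_n) : Prop :=
  forall (V : normedModType R) (A : set V) (u : V -> 'I_n -> R)
         (astar : 'rV[R]_n -> V),
    compact A ->
    (forall th, {within A, continuous (fun a => u a th)}) ->
    consistent_choice A u astar ->
    forall (m m' : nat) (pi : 'I_n -> 'I_m -> R) (pi' : 'I_n -> 'I_m' -> R),
      experiment pi -> experiment pi' -> blackwell_ge mu pi pi' ->
      exp_W u astar phi mu pi' <= exp_W u astar phi mu pi.

(* Main.v *)
Require Import Defs.
From HB Require Import structures.
From mathcomp Require Import all_boot all_order all_algebra.
From mathcomp Require Import all_classical all_reals all_analysis.
From mathcomp Require Import ring lra.
Import Order.TTheory GRing.Theory Num.Theory.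
Import numFieldNormedType.Exports.
Local Open Scope classical_set_scope.
Local Open Scope ring_scope.
Set Implicit Arguments. Unset Strict Implicit. Unset Printing Implicit Defensive.
Section Basics.
Variable R : realType.
Variable n : nat.
Implicit Types (u v x y z : 'rV[R]_n).

Definition dot u v : R := \sum_i u ord0 i * v ord0 i.

Lemma dotDr u v x : dot u (v + x) = dot u v + dot u x.
Proof. by rewrite /dot -big_split /=; apply: eq_bigr => i _; rewrite mxE mulrDr. Qed.
Lemma dotZr (a : R) u v : dot u (a *: v) = a * dot u v.
Proof. by rewrite /dot mulr_sumr; apply: eq_bigr => i _; rewrite mxE mulrCA. Qed.
Lemma dotNr u v : dot u (- v) = - dot u v.
Proof. by rewrite /dot -sumrN; apply: eq_bigr => i _; rewrite mxE mulrN. Qed.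
Lemma dotBr u v x : dot u (v - x) = dot u v - dot u x.
Proof. by rewrite dotDr dotNr. Qed.
Lemma dotC u v : dot u v = dot v u.
Proof. by rewrite /dot; apply: eq_bigr => i _; rewrite mulrC. Qed.
Lemma dotDl u v x : dot (v + x) u = dot v u + dot x u.
Proof. by rewrite !(dotC _ u) dotDr. Qed.
Lemma dotZl (a : R) u v : dot (a *: v) u = a * dot v u.
Proof. by rewrite !(dotC _ u) dotZr. Qed.
Lemma dotBl u v x : dot (v - x) u = dot v u - dot x u.
Proof. by rewrite !(dotC _ u) dotBr. Qed.
Lemma dotNl u v : dot (- v) u = - dot v u.
Proof. by rewrite !(dotC _ u) dotNr. Qed.
Lemma dot0r u : dot u 0 = 0.
Proof. by have := dotZr 0 u 0; rewrite scale0r mul0r. Qed.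
Lemma dot_ge0 u : 0 <= dot u u.
Proof. by apply: sumr_ge0 => i _; rewrite -expr2 sqr_ge0. Qed.
Lemma dot_eq0 u : dot u u = 0 -> u = 0.
Proof.
move=> /eqP; rewrite /dot psumr_eq0 => [/allP H|i _]; last by rewrite -expr2 sqr_ge0.
apply/rowP => i; rewrite mxE; have := H i (mem_index_enum i).
by rewrite implyTb mulf_eq0 orbb => /eqP.
Qed.

Lemma simplex_coord x i : simplex n x -> 0 <= x ord0 i <= 1.
Proof.
move=> [H0 H1]; rewrite H0 /= -H1 (bigD1 i) //= lerDl.
by apply: sumr_ge0 => j _.
Qed.

Lemma simplex_conv (t : R) x y : simplex n x -> simplex n y -> 0 <= t <= 1 ->
  simplex n ((1 - t) *: x + t *: y).
Proof.
move=> [x0 x1] [y0 y1] /andP[t0 t1]; split.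
  move=> i; rewrite !mxE; apply: addr_ge0; apply: mulr_ge0 => //; lra.
rewrite (eq_bigr (fun i => (1 - t) * x ord0 i + t * y ord0 i)); last first.
  by move=> i _; rewrite !mxE.
by rewrite big_split /= -!mulr_sumr x1 y1; lra.
Qed.

Lemma dot_simplex_const (w : 'rV[R]_n) (c : R) x : simplex n x ->
  dot (w + c *: const_mx 1) x = dot w x + c.
Proof.
move=> [_ x1]; rewrite dotDl dotZl; congr (_ + _).
rewrite /dot (eq_bigr (fun i => x ord0 i)) ?x1 ?mulr1 // => i _.
by rewrite mxE mul1r.
Qed.

End Basics.
Section Reduction.
Variable R : realType.
Variable n : nat.
Variable mu : 'rV[R]_n.
Variable phi : 'rV[R]_n -> 'rV[R]_n.
Hypothesis Hmu : rel_interior n mu.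

Definition mkpi {m} (p : 'I_m -> R) (xs : 'I_m -> 'rV[R]_n) : 'I_n -> 'I_m -> R :=
  fun th s => p s * xs s ord0 th / mu ord0 th.

Lemma mkpi_prop m (p : 'I_m -> R) (xs : 'I_m -> 'rV[R]_n) :
  (forall s, 0 < p s) -> (forall s, simplex n (xs s)) ->
  (forall th, \sum_s p s * xs s ord0 th = mu ord0 th) ->
  [/\ experiment (mkpi p xs), (forall s, sigprob mu (mkpi p xs) s = p s)
    & (forall s, post mu (mkpi p xs) s = xs s)].
Proof.
move=> p0 xs0 hsum; have mu0 th : 0 < mu ord0 th by case: Hmu => _; apply.
have sp s : sigprob mu (mkpi p xs) s = p s.
  rewrite /sigprob /mkpi (eq_bigr (fun th => p s * xs s ord0 th)).
    by rewrite -mulr_sumr (proj2 (xs0 s)) mulr1.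
  by move=> th _; rewrite mulrC divfK // gt_eqF.
split => //.
- split => [th s|th].
    rewrite /mkpi; apply: divr_ge0; last exact: ltW.
    by apply: mulr_ge0; [exact: ltW | exact: (proj1 (xs0 s))].
  by rewrite /mkpi -mulr_suml hsum divff // gt_eqF.
- move=> s; apply/rowP => th; rewrite /post mxE sp /mkpi.
  rewrite [mu _ _ * _]mulrC divfK ?gt_eqF // mulrC mulKf // gt_eqF //.
Qed.

End Reduction.
Section Reduction2.
Variable R : realType.
Variable n : nat.
Variable mu : 'rV[R]_n.
Variable phi : 'rV[R]_n -> 'rV[R]_n.
Hypothesis Hmu : rel_interior n mu.
Hypothesis HB : respects_blackwell mu phi.

Definition Hval (w x : 'rV[R]_n) : R :=
  (if 0 < dot w (phi x) then 1 else 0) * dot w x.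

Lemma exists_q : exists q : R, [/\ 0 < q, q < 1 & forall th, q <= mu ord0 th].
Proof.
have mu0 th : 0 < mu ord0 th by case: Hmu => _; apply.
pose S := \sum_th (mu ord0 th)^-1.
have S0 : 0 <= S by apply: sumr_ge0 => th _; rewrite invr_ge0 ltW.
have Sth th : (mu ord0 th)^-1 <= S.
  by rewrite /S (bigD1 th) //= lerDl; apply: sumr_ge0 => i _; rewrite invr_ge0 ltW.
exists (1 / (2 + S)); split.
- by rewrite divr_gt0 //; lra.
- by rewrite ltr_pdivrMr ?mul1r; lra.
- move=> th; rewrite ler_pdivrMr; last lra.
  have := Sth th; rewrite -(ler_pM2l (mu0 th)) mulfV ?gt_eqF // => h.
  have : mu ord0 th * S <= mu ord0 th * (2 + S).
    by rewrite ler_pM2l //; lra.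
  lra.
Qed.

Lemma exp_util_lin (w y : 'rV[R]_n) (a : R) :
  exp_util (fun (a : R) th => a * w ord0 th) y a = a * dot w y.
Proof.
rewrite /exp_util /dot mulr_sumr; apply eq_bigr => i _.
by rewrite [y _ _ * _]mulrC -mulrA.
Qed.

Lemma conv_H (w a b : 'rV[R]_n) (lam : R) :
  simplex n a -> simplex n b -> 0 < lam < 1 ->
  Hval w (lam *: a + (1 - lam) *: b) <= lam * Hval w a + (1 - lam) * Hval w b.
Proof.
move=> sa sb /andP[l0 l1].
have [q [q0 q1 qmu]] := exists_q.
have [y ydef] : {y | y = lam *: a + (1 - lam) *: b} by eexists.
have sy : simplex n y.
  by rewrite ydef; have := simplex_conv sb sa (t:=lam); rewrite addrC; apply; rewrite ltW ?l0 ?ltW.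
have [z zdef'] : {z | z = (1 - q)^-1 *: (mu - q *: y)} by eexists.
have sz : simplex n z.
  rewrite zdef'; split.
    move=> i; rewrite !mxE; apply: mulr_ge0; first by rewrite invr_ge0; lra.
    have := simplex_coord i sy; move=> /andP[_ yi1].
    have := qmu i; have : q * y ord0 i <= q by rewrite ler_piMr // ltW.
    lra.
  rewrite (eq_bigr (fun i => (1 - q)^-1 * (mu ord0 i - q * y ord0 i))); last first.
    by move=> i _; rewrite !mxE.
  rewrite -mulr_sumr sumrB -mulr_sumr (proj2 (proj1 Hmu)) (proj2 sy) mulr1.
  by rewrite mulVf // subr_eq0 gt_eqF.
pose p3 : 'I_3 -> R := fun s => if val s == 0%N then q * lam
  else if val s == 1%N then q * (1 - lam) else 1 - q.
pose x3 : 'I_3 -> 'rV[R]_n := fun s => if val s == 0%N then a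
  else if val s == 1%N then b else z.
pose p2 : 'I_2 -> R := fun s => if val s == 0%N then q else 1 - q.
pose x2 : 'I_2 -> 'rV[R]_n := fun s => if val s == 0%N then y else z.
have p3pos s : 0 < p3 s.
  by rewrite /p3; case: ifP => _; [|case: ifP => _]; rewrite ?mulr_gt0 //; lra.
have p2pos s : 0 < p2 s by rewrite /p2; case: ifP => _ //; lra.
have x3s s : simplex n (x3 s) by rewrite /x3; case: ifP => _; [|case: ifP => _].
have x2s s : simplex n (x2 s) by rewrite /x2; case: ifP => _.
have zdef : mu = q *: y + (1 - q) *: z.
  rewrite zdef' scalerA mulfV ?scale1r; last by rewrite subr_eq0 gt_eqF.
  by rewrite addrC subrK.
have sum3 th : \sum_s p3 s * x3 s ord0 th = mu ord0 th.
  rewrite !big_ord_recl big_ord0 /= /p3 /x3 /= addr0 zdef ydef !mxE; lra.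
have sum2 th : \sum_s p2 s * x2 s ord0 th = mu ord0 th.
  by rewrite !big_ord_recl big_ord0 /= /p2 /x2 /= addr0 zdef !mxE.
have [e3 sp3 po3] := mkpi_prop Hmu p3pos x3s sum3.
have [e2 sp2 po2] := mkpi_prop Hmu p2pos x2s sum2.
pose A : set R := [set 0; 1].
pose u := fun (a : R) (th : 'I_n) => a * w ord0 th.
pose astar := fun yy : 'rV[R]_n => if 0 < dot w yy then (1:R) else 0.
have cA : compact A.
  by apply: finite_compact; rewrite finite_setU; split; exact: finite_set1.
have cu th : {within A, continuous (fun a => u a th)}.
  apply: continuous_subspaceT => x; rewrite /u.
  by apply: cvgMr_tmp; exact: cvg_id.
have cc : consistent_choice A u astar.
  move=> yy _; split; first by rewrite /astar /A; case: ifP => _; [right|left].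
  move=> a0; rewrite /u !exp_util_lin /astar => -[->|->]; case: ifP => h;
  rewrite ?mul0r ?mul1r //; last lra.
  by rewrite ltW.
have := HB cA cu cc e3 e2.
have bw : blackwell_ge mu (mkpi mu p3 x3) (mkpi mu p2 x2).
  rewrite /blackwell_ge.
  exists (fun (i : 'I_3) (j : 'I_2) => if val j == 0%N then
           (if val i == 2%N then 0 else p3 i)
         else (if val i == 2%N then 1 - q else 0)); split.
  - move=> i j; case: ifP => _; case: ifP => _ //; try lra.
    exact: ltW.
  - move=> i; rewrite sp3 !big_ord_recl big_ord0 /=.
    by case: i => [[|[|[|k]]] Hi] //=; rewrite /p3 /= ?addr0 ?add0r.
  - move=> j; rewrite sp2 !big_ord_recl big_ord0 /=.
    case: j => [[|[|k]] Hj] //=; rewrite /p2 /p3 /= ?addr0 ?add0r //.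
    by rewrite -mulrDr addrC subrK mulr1.
  - move=> j; rewrite po2 sp2; under eq_bigr do rewrite po3.
    rewrite !big_ord_recl big_ord0 /=.
    case: j => [[|[|k]] Hj] //=; rewrite /p2 /p3 /x2 /x3 /= ?scale0r ?addr0 ?add0r //.
    by rewrite ydef scalerDr !scalerA.
move=> /(_ bw).
have WH x : Wval u astar phi x = Hval w x.
  by rewrite /Wval exp_util_lin /Hval /astar.
rewrite /exp_W.
under eq_bigr do rewrite sp2 po2 WH.
under [X in _ <= X]eq_bigr do rewrite sp3 po3 WH.
rewrite !big_ord_recl !big_ord0 /= /p2 /p3 /x2 /x3 /= -ydef => h.
rewrite -(ler_pM2l q0); lra.
Qed.

End Reduction2.
Section SegLim.
Variable R : realType.
Variable n : nat.

Lemma sum_cvg {T : Type} {G : set_system T} {FG : Filter G} (I : Type) (r : seq I)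
  (f : I -> T -> R) (l : I -> R) :
  (forall i, f i @ G --> l i) ->
  (fun x => \sum_(i <- r) f i x) @ G --> \sum_(i <- r) l i.
Proof.
move=> hf; elim: r => [|a r IH].
  rewrite big_nil; under eq_fun do rewrite big_nil; exact: cvg_cst.
rewrite big_cons; under eq_fun do rewrite big_cons.
exact: cvgD.
Qed.

Lemma dot_cvg {T : Type} {G : set_system T} {FG : Filter G} (w : 'rV[R]_n)
  (f : T -> 'rV[R]_n) (l : 'rV[R]_n) :
  f @ G --> l -> (fun x => dot w (f x)) @ G --> dot w l.
Proof.
move=> fl; rewrite /dot; apply: sum_cvg => i.
apply: cvgMl_tmp.
exact: (cvg_comp _ _ fl (@coord_continuous R 1 n ord0 i l)).
Qed.

Variable phi : 'rV[R]_n -> 'rV[R]_n.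
Hypothesis Hc : {within simplex n, continuous phi}.

Lemma seglim (w z e : 'rV[R]_n) (c : R) : simplex n z -> simplex n e ->
  (forall t, 0 < t -> t <= 1 -> 0 <= dot w (phi ((1 - t) *: z + t *: e)) + c) ->
  0 <= dot w (phi z) + c.
Proof.
move=> sz se H.
pose g := fun t : R => (1 - t) *: z + t *: e.
have gcv : g @ 0^'+ --> z.
  have : g @ 0^'+ --> ((1 - 0) *: z + 0 *: e).
    have h0 : g @ nbhs (0:R) --> ((1 - 0) *: z + 0 *: e).
      apply: cvgD; apply: cvgZr_tmp; last exact: cvg_id.
      by apply: cvgB; [exact: cvg_cst | exact: cvg_id].
    exact: cvg_within_filter h0.
  by rewrite subr0 scale1r scale0r addr0.
have gin : \forall t \near 0^'+, simplex n (g t) /\ 0 < t /\ t <= 1.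
  near=> t.
  have t0 : 0 < t by near: t; exact: nbhs_right_gt.
  have t1 : t <= 1 by near: t; exact: nbhs_right_le.
  by split => //; apply: simplex_conv => //; rewrite ltW.
have gw : g @ 0^'+ --> within (simplex n) (nbhs z).
  move=> P /= hP.
  have h : \forall t \near 0^'+, simplex n (g t) -> P (g t) := gcv _ hP.
  by apply: filterS2 h gin => t h1 [h2 _]; exact: h1.
have pc : phi @ within (simplex n) (nbhs z) --> phi z.
  by rewrite (nbhs_subspace_in sz); exact: Hc.
have pg : (phi \o g) @ 0^'+ --> phi z by exact: cvg_comp gw pc.
have fc : (fun t => dot w (phi (g t)) + c) @ 0^'+ --> dot w (phi z) + c.
  by apply: cvgD; [exact: (dot_cvg (w:=w) pg) | exact: cvg_cst].
rewrite leNgt; apply/negP => neg.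
have h : \forall t \near 0^'+, dot w (phi (g t)) + c < 0.
  exact: (@cvgr_lt R R 0^'+ _ _ _ fc 0 neg).
have [t /= [h1 [_ [t0 t1]]]] := @filter_ex _ (0:R)^'+ _ _ (filterI h gin).
by have := H t t0 t1; rewrite /g /= in h1; lra.
Unshelve. all: by end_near.
Qed.

End SegLim.
Section LA.
Variable R : realType.
Variable n : nat.
Variable mu : 'rV[R]_n.
Variable phi : 'rV[R]_n -> 'rV[R]_n.
Hypothesis Hmu : rel_interior n mu.
Hypothesis HB : respects_blackwell mu phi.
Hypothesis Hc : {within simplex n, continuous phi}.

Lemma LA (w x z : 'rV[R]_n) : simplex n x -> simplex n z ->
  dot w x < 0 -> 0 < dot w (phi x) -> dot w z < 0 -> 0 <= dot w (phi z).
Proof.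
move=> sx sz wx wpx wz.
suff : 0 <= dot w (phi z) + 0 by rewrite addr0.
apply: (seglim Hc sz sx) => t t0 t1; rewrite addr0.
have Hz : Hval phi w z <= 0.
  by rewrite /Hval; case: ifP => _; rewrite ?mul1r ?mul0r // ltW.
have Hx : Hval phi w x = dot w x by rewrite /Hval wpx mul1r.
have : Hval phi w ((1 - t) *: z + t *: x) < 0.
  have [->|tlt1] := eqVneq t 1.
    by rewrite subrr scale0r add0r scale1r Hx.
  have tl : t < 1 by rewrite lt_neqAle tlt1 t1.
  have := conv_H Hmu HB w sz sx (lam := 1 - t).
  have -> : 1 - (1 - t) = t by rewrite opprB addrC subrK.
  move=> /(_ ltac:(apply/andP; split; lra)).
  have : t * Hval phi w x < 0 by rewrite Hx pmulr_rlt0.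
  have : (1 - t) * Hval phi w z <= 0 by apply: mulr_ge0_le0 => //; lra.
  lra.
rewrite /Hval; case: ifP => [h _|_]; first exact: ltW.
by rewrite mul0r ltxx.
Qed.

End LA.
Section Coord.
Variable R : realType.
Variable n : nat.

Definition ev (k : 'I_n) : 'rV[R]_n := \row_j ((j == k)%:R).

Lemma ev_simplex k : simplex n (ev k).
Proof.
split=> [j|]; first by rewrite mxE ler0n.
rewrite (bigD1 k) //= big1 ?mxE ?eqxx ?addr0 // => j /negbTE hj.
by rewrite mxE hj.
Qed.

Lemma evE k j : ev k ord0 j = (j == k)%:R.
Proof. by rewrite mxE. Qed.

Lemma dot_ev k x : dot (ev k) x = x ord0 k.
Proof.
rewrite /dot (bigD1 k) //= big1 ?mxE ?eqxx ?mul1r ?addr0 // => j /negbTE hj.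
by rewrite mxE hj mul0r.
Qed.

Lemma between2 (u v a : R) : u < a -> v < a -> exists c, [/\ u < c, v < c & c < a].
Proof.
move=> ua va; case: (leP u v) => h.
  by exists ((v + a) / 2); split; lra.
by exists ((u + a) / 2); split; lra.
Qed.

Lemma between2' (u v a : R) : a < u -> a < v -> exists c, [/\ c < u, c < v & a < c].
Proof.
move=> ua va; have [c [h1 h2 h3]] := between2 (u:=-u) (v:=-v) (a:=-a) ltac:(lra) ltac:(lra).
by exists (- c); split; lra.
Qed.

End Coord.
Arguments ev {R n}.
Arguments ev_simplex {R n}.

Section TwoState.
Variable R : realType.
Variable n : nat.
Variable mu : 'rV[R]_n.
Variable phi : 'rV[R]_n -> 'rV[R]_n.
Hypothesis Hmu : rel_interior n mu.
Hypothesis Hphi : forall x, simplex n x -> simplex n (phi x).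
Hypothesis HB : respects_blackwell mu phi.
Hypothesis Hc : {within simplex n, continuous phi}.

Lemma LAp (i : 'I_n) (c : R) x z : simplex n x -> simplex n z ->
  x ord0 i < c -> c < phi x ord0 i -> z ord0 i < c -> c <= phi z ord0 i.
Proof.
move=> sx sz h1 h2 h3.
have := LA Hmu HB Hc (w := ev i + (- c) *: const_mx 1) sx sz.
rewrite (dot_simplex_const _ _ sx) (dot_simplex_const _ _ sz) (dot_simplex_const _ _ (Hphi sx)) (dot_simplex_const _ _ (Hphi sz)) !dot_ev.
move=> /(_ ltac:(lra) ltac:(lra) ltac:(lra)); lra.
Qed.

Lemma LAm (i : 'I_n) (c : R) x z : simplex n x -> simplex n z ->
  c < x ord0 i -> phi x ord0 i < c -> c < z ord0 i -> phi z ord0 i <= c.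
Proof.
move=> sx sz h1 h2 h3.
have := LA Hmu HB Hc (w := - ev i + c *: const_mx 1) sx sz.
rewrite (dot_simplex_const _ _ sx) (dot_simplex_const _ _ sz) (dot_simplex_const _ _ (Hphi sx)) (dot_simplex_const _ _ (Hphi sz)) !dotNl !dot_ev.
move=> /(_ ltac:(lra) ltac:(lra) ltac:(lra)); lra.
Qed.

Variables (i j : 'I_n).
Hypothesis hij : i != j.

Let a := phi (ev j) ord0 i.
Let b := phi (ev i) ord0 i.

Lemma evji : ev j ord0 i = 0 :> R.
Proof. by rewrite evE (negbTE hij). Qed.
Lemma evii : ev i ord0 i = 1 :> R.
Proof. by rewrite evE eqxx. Qed.

Lemma claim1 x : simplex n x -> x ord0 i < a -> phi x ord0 i = a.
Proof.
move=> sx ta; have /andP[t0 t1] := simplex_coord i sx.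
apply/eqP; rewrite eq_sym eq_le; apply/andP; split.
  rewrite leNgt; apply/negP => fa.
  have [c [h1 h2 h3]] := between2 ta fa.
  have := LAp (i:=i) (c:=c) (ev_simplex j) sx; rewrite evji.
  move=> /(_ ltac:(lra) h3 h1); lra.
rewrite leNgt; apply/negP => af.
have := LAp (i:=i) (c:=(a + phi x ord0 i) / 2) sx (ev_simplex j); rewrite evji.
move=> /(_ ltac:(lra) ltac:(lra) ltac:(lra)); rewrite -/a; lra.
Qed.

Lemma claim3 x : simplex n x -> b < x ord0 i -> phi x ord0 i = b.
Proof.
move=> sx bt; have /andP[t0 t1] := simplex_coord i sx.
apply/eqP; rewrite eq_le; apply/andP; split.
  rewrite leNgt; apply/negP => bf.
  have [c [h1 h2 h3]] := between2' bt bf.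
  have := LAm (i:=i) (c:=c) (ev_simplex i) sx; rewrite evii.
  move=> /(_ ltac:(lra) h3 h1); lra.
rewrite leNgt; apply/negP => fb.
have := LAm (i:=i) (c:=(b + phi x ord0 i) / 2) sx (ev_simplex i); rewrite evii.
move=> /(_ ltac:(lra) ltac:(lra) ltac:(lra)); rewrite -/b; lra.
Qed.

Lemma claim2 x : simplex n x -> a <= x ord0 i <= b -> phi x ord0 i = x ord0 i.
Proof.
move=> sx /andP[hat htb]; have /andP[t0 t1] := simplex_coord i sx.
apply/eqP; rewrite eq_le; apply/andP; split.
  rewrite leNgt; apply/negP => tf.
  have := LAp (i:=i) (c:=(x ord0 i + phi x ord0 i) / 2) sx (ev_simplex j); rewrite evji.
  move=> /(_ ltac:(lra) ltac:(lra) ltac:(lra)); rewrite -/a; lra.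
rewrite leNgt; apply/negP => ft.
have := LAm (i:=i) (c:=(x ord0 i + phi x ord0 i) / 2) sx (ev_simplex i); rewrite evii.
move=> /(_ ltac:(lra) ltac:(lra) ltac:(lra)); rewrite -/b; lra.
Qed.

Lemma ab_bounds : [/\ 0 <= a, a <= b & b <= 1].
Proof.
have /andP[a0 a1] : 0 <= a <= 1 := simplex_coord i (Hphi (ev_simplex j)).
have /andP[b0 b1] : 0 <= b <= 1 := simplex_coord i (Hphi (ev_simplex i)).
split => //; rewrite leNgt; apply/negP => ba.
pose m := (a + b) / 2.
have sx := simplex_conv (t := m) (ev_simplex j) (ev_simplex i).
have sx' := sx ltac:(apply/andP; split; rewrite /m; lra).
have xi : ((1 - m) *: ev j + m *: ev i) ord0 i = m.
  by rewrite !mxE -!evE evji evii; lra.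
have := claim1 sx'; have := claim3 sx'; rewrite xi /m.
move=> /(_ ltac:(lra)) -> /(_ ltac:(lra)); lra.
Qed.

End TwoState.
Lemma arith1 (R : realType) (a b : R) :
  a * -2 + b * -2 - (2 * a ^+ 2 + 2 * b ^+ 2 + 4) + 1 < 0.
Proof.
have h1 : 0 <= (a + 1) ^+ 2 := sqr_ge0 _.
have h2 : 0 <= (b + 1) ^+ 2 := sqr_ge0 _.
nra.
Qed.

Lemma arith2 (R : realType) (a b K : R) : 0 < a -> a * K = 2 * b ^+ 2 + 2 ->
  a * (-1 - K) + b * -2 + 1 < 0.
Proof.
move=> a0 aK.
have h2 : 0 <= (b + 1) ^+ 2 := sqr_ge0 _.
nra.
Qed.

Section Many.
Variable R : realType.
Variable n : nat.
Variable mu : 'rV[R]_n.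
Variable phi : 'rV[R]_n -> 'rV[R]_n.
Hypothesis Hmu : rel_interior n mu.
Hypothesis Hphi : forall x, simplex n x -> simplex n (phi x).
Hypothesis HB : respects_blackwell mu phi.
Hypothesis Hc : {within simplex n, continuous phi}.
Variable x0 : 'rV[R]_n.
Hypothesis sx0 : simplex n x0.
Hypothesis nfix : phi x0 != x0.

Variables y0 X : 'rV[R]_n.
Hypothesis hy0 : phi x0 = y0.
Hypothesis hX : X = x0 - y0.
Let gxx := dot X X.
Let Dg (P : 'rV[R]_n) := gxx * dot P P - (dot X P) ^+ 2.

Lemma gxx_gt0 : 0 < gxx.
Proof.
rewrite lt_neqAle dot_ge0 andbT eq_sym; apply/negP => /eqP /dot_eq0 /eqP.
by rewrite hX -hy0 subr_eq0 eq_sym (negbTE nfix).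
Qed.

Lemma LAy (v : 'rV[R]_n) (k : R) x z : simplex n x -> simplex n z ->
  dot v (x - y0) + k < 0 -> 0 < dot v (phi x - y0) + k ->
  dot v (z - y0) + k < 0 -> 0 <= dot v (phi z - y0) + k.
Proof.
move=> sx sz.
have := LA Hmu HB Hc (w := v + (k - dot v y0) *: const_mx 1) sx sz.
rewrite (dot_simplex_const _ _ sx) (dot_simplex_const _ _ sz).
rewrite (dot_simplex_const _ _ (Hphi sx)) (dot_simplex_const _ _ (Hphi sz)) !dotBr.
move=> H h1 h2 h3; have := H ltac:(lra) ltac:(lra) ltac:(lra); lra.
Qed.

Lemma G z : simplex n z -> Dg (z - y0) != 0 -> phi z = y0.
Proof.
move=> sz.
have [Z Zdef] : {Z | Z = z - y0} by eexists.
have [W Wdef] : {W | W = phi z - y0} by eexists.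
rewrite -Zdef => DZ.
have gxx0 := gxx_gt0.
set D := Dg Z in DZ.
set gzz := dot Z Z.
set gxz := dot X Z.
have Dd : D = gxx * gzz - gxz ^+ 2 by [].
pose sv s t := ((s * gzz - t * gxz) / D) *: X + ((t * gxx - s * gxz) / D) *: Z.
have svX s t : dot (sv s t) X = s.
  rewrite dotDl !dotZl -/gxx (dotC Z X) -/gxz Dd.
  by field; rewrite -Dd.
have svZ s t : dot (sv s t) Z = t.
  rewrite dotDl !dotZl -/gzz -/gxz Dd.
  by field; rewrite -Dd.
pose al := (dot W X * gzz - dot W Z * gxz) / D.
pose be := (dot W Z * gxx - dot W X * gxz) / D.
have [Rr Rrdef] : {Rr | Rr = W - al *: X - be *: Z} by eexists.
have RX : dot Rr X = 0.
  rewrite Rrdef !dotBl !dotZl -/gxx (dotC Z X) -/gxz /al /be Dd.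
  by field; rewrite -Dd.
have RZ : dot Rr Z = 0.
  rewrite Rrdef !dotBl !dotZl -/gzz -/gxz /al /be Dd.
  by field; rewrite -Dd.
have svR s t : dot (sv s t) Rr = 0.
  by rewrite /sv dotDl !dotZl !(dotC _ Rr) RX RZ !mulr0 addr0.
have WE : W = al *: X + be *: Z + Rr.
  by rewrite Rrdef; apply/rowP => i; rewrite !mxE; ring.
have dW v : dot v W = al * dot v X + be * dot v Z + dot v Rr.
  by rewrite {1}WE dotDr dotDr !dotZr.
have px0 v : dot v (phi x0 - y0) = 0.
  by rewrite hy0 subrr dot0r.
have LA1 v : dot v X + 1 < 0 -> dot v Z + 1 < 0 -> 0 <= dot v W + 1.
  move=> h1 h2; rewrite Wdef; apply: (LAy sx0 sz).
  - by rewrite -hX.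
  - by rewrite px0 add0r.
  - by rewrite -Zdef.
have LA2 v : dot v Z - 1 < 0 -> 0 < dot v W - 1 -> dot v X - 1 < 0 -> False.
  move=> h1 h2 h3.
  have := LAy (v := v) (k := -1) sz sx0; rewrite -Zdef -Wdef px0 -hX.
  by move=> /(_ h1 h2 h3); lra.
have R0 : Rr = 0.
  apply: dot_eq0; apply/eqP; apply: contraT => hR.
  have Rpos : 0 < dot Rr Rr by rewrite lt_neqAle eq_sym hR dot_ge0.
  pose K := 2 * al ^+ 2 + 2 * be ^+ 2 + 4.
  pose v := sv (-2) (-2) + (- K / dot Rr Rr) *: Rr.
  have vX : dot v X = -2 by rewrite /v dotDl svX dotZl RX mulr0 addr0.
  have vZ : dot v Z = -2 by rewrite /v dotDl svZ dotZl RZ mulr0 addr0.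
  have vR : dot v Rr = - K.
    by rewrite /v dotDl svR add0r dotZl mulrC mulrCA mulfV ?mulr1 // gt_eqF.
  have := LA1 v; rewrite dW vX vZ vR => /(_ ltac:(lra) ltac:(lra)).
  rewrite /K => h; have := arith1 al be; lra.
have dW' v : dot v W = al * dot v X + be * dot v Z.
  by rewrite dW R0 dot0r addr0.
have al0 : al <= 0.
  rewrite leNgt; apply/negP => alp.
  pose K := (2 * be ^+ 2 + 2) / al.
  have aK : al * K = 2 * be ^+ 2 + 2 by rewrite /K mulrC divfK // gt_eqF.
  have K0 : 0 < K by rewrite /K divr_gt0 //; have := sqr_ge0 be; have := sqr_ge0 al; lra.
  have := LA1 (sv (-1 - K) (-2)); rewrite dW' !svX !svZ.
  move=> /(_ ltac:(lra) ltac:(lra)); have := arith2 alp aK; lra.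
have be0 : be <= 0.
  rewrite leNgt; apply/negP => bep.
  pose K := (2 * al ^+ 2 + 2) / be.
  have bK : be * K = 2 * al ^+ 2 + 2 by rewrite /K mulrC divfK // gt_eqF.
  have K0 : 0 < K by rewrite /K divr_gt0 //; have := sqr_ge0 be; have := sqr_ge0 al; lra.
  have := LA1 (sv (-2) (-1 - K)); rewrite dW' !svX !svZ.
  move=> /(_ ltac:(lra) ltac:(lra)); have := arith2 bep bK; lra.
have alz : al = 0.
  apply/eqP; rewrite eq_le al0 /= leNgt; apply/negP => aln.
  pose K := - 2 / al.
  have aK : al * K = - 2 by rewrite /K mulrC divfK // lt_eqF.
  have K0 : 0 < K.
    have : al^-1 < 0 by rewrite invr_lt0.
    rewrite /K; lra.
  apply: (LA2 (sv (- K) 0)); rewrite ?dW' ?svX ?svZ; lra.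
have bez : be = 0.
  apply/eqP; rewrite eq_le be0 /= leNgt; apply/negP => ben.
  pose K := - 2 / be.
  have bK : be * K = - 2 by rewrite /K mulrC divfK // lt_eqF.
  have K0 : 0 < K.
    have : be^-1 < 0 by rewrite invr_lt0.
    rewrite /K; lra.
  apply: (LA2 (sv 0 (- K))); rewrite ?dW' ?svX ?svZ; lra.
have : W = 0 by rewrite WE R0 alz bez !scale0r !addr0.
by rewrite Wdef => /eqP; rewrite subr_eq0 => /eqP.
Qed.

Lemma Dg0 P : Dg P = 0 -> P = (dot X P / gxx) *: X.
Proof.
move=> h; have g0 := gxx_gt0.
have [k kdef] : {k | k = dot X P / gxx} by eexists.
rewrite -kdef.
have e : gxx * dot (P - k *: X) (P - k *: X) = Dg P.
  rewrite /Dg !dotBl !dotBr !dotZl !dotZr (dotC P X) -/gxx kdef.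
  by field; rewrite gt_eqF.
have : dot (P - k *: X) (P - k *: X) = 0.
  by move: e; rewrite h => /eqP; rewrite mulf_eq0 gt_eqF //= => /eqP.
by move=> /dot_eq0 /eqP; rewrite subr_eq0 => /eqP.
Qed.

Lemma Dg_comb m t E : Dg (m *: X + t *: E) = t ^+ 2 * Dg E.
Proof. by rewrite /Dg !dotDl !dotDr !dotZl !dotZr (dotC E X) -/gxx; ring. Qed.

Lemma exists_e : (3 <= n)%N -> exists e, simplex n e /\ Dg (e - y0) != 0.
Proof.
move=> n3.
have h2 : (2 < n)%N := n3.
have h1 : (1 < n)%N := ltnW h2.
have h0 : (0 < n)%N := ltnW h1.
pose k0 := Ordinal h0; pose k1 := Ordinal h1; pose k2 := Ordinal h2.
case: (eqVneq (Dg (ev k0 - y0)) 0) => D0; last first.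
  by exists (ev k0); split => //; exact: ev_simplex.
case: (eqVneq (Dg (ev k1 - y0)) 0) => D1; last first.
  by exists (ev k1); split => //; exact: ev_simplex.
case: (eqVneq (Dg (ev k2 - y0)) 0) => D2; last first.
  by exists (ev k2); split => //; exact: ev_simplex.
exfalso.
have E0 := Dg0 D0; have E1 := Dg0 D1; have E2 := Dg0 D2.
set c0 := dot X (ev k0 - y0) / gxx in E0.
set c1 := dot X (ev k1 - y0) / gxx in E1.
set c2 := dot X (ev k2 - y0) / gxx in E2.
have n20 : (k2 == k0) = false by apply/eqP => /(congr1 val).
have n21 : (k2 == k1) = false by apply/eqP => /(congr1 val).
have n10 : (k1 == k0) = false by apply/eqP => /(congr1 val).
have A := congr1 (fun M : 'rV[R]_n => M ord0 k2) E0.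
have B := congr1 (fun M : 'rV[R]_n => M ord0 k2) E1.
have C := congr1 (fun M : 'rV[R]_n => M ord0 k2) E2.
have D := congr1 (fun M : 'rV[R]_n => M ord0 k1) E0.
have E := congr1 (fun M : 'rV[R]_n => M ord0 k1) E1.
move: A B C D E; rewrite /= !mxE n20 n21 n10 !eqxx => A B C D E.
move: A B C D E; rewrite /= ?mulr0n ?mulr1n => A B C D E.
have h : (c1 - c0) * X ord0 k2 = 0 by lra.
have h' : (c2 - c0) * X ord0 k2 = 1 by lra.
move: h => /eqP; rewrite mulf_eq0 => /orP[/eqP hc|/eqP hx]; last first.
  by move: h'; rewrite hx mulr0 => /eqP; rewrite eq_sym oner_eq0.
have hc' : c1 = c0 by lra.
move: E; rewrite hc' => E; lra.
Qed.

Lemma many_const : (3 <= n)%N -> forall z, simplex n z -> phi z = y0.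
Proof.
move=> n3; have [e [se De]] := exists_e n3.
move=> z sz; case: (eqVneq (Dg (z - y0)) 0) => Dz; last exact: G sz Dz.
have Ez := Dg0 Dz.
set kz := dot X (z - y0) / gxx in Ez.
have key t : 0 < t -> t <= 1 -> phi ((1 - t) *: z + t *: e) = y0.
  move=> t0 t1; apply: G; first by apply: simplex_conv => //; rewrite ltW.
  have -> : (1 - t) *: z + t *: e - y0 = ((1 - t) * kz) *: X + t *: (e - y0).
    rewrite -scalerA -Ez; apply/rowP => k; rewrite !mxE; ring.
  by rewrite Dg_comb mulf_neq0 // expf_neq0 // gt_eqF.
apply/rowP => k.
have s1 : 0 <= dot (ev k) (phi z) + - y0 ord0 k.
  apply: (seglim Hc sz se) => t t0 t1; rewrite key // dot_ev; lra.
have s2 : 0 <= dot (- ev k) (phi z) + y0 ord0 k.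
  apply: (seglim Hc sz se) => t t0 t1; rewrite key // dotNl dot_ev; lra.
move: s1 s2; rewrite dotNl dot_ev; lra.
Qed.

End Many.
Theorem mainTheorem14 (R : realType) (n : nat) (mu : 'rV[R]_n)
  (phi : 'rV[R]_n -> 'rV[R]_n) :
  (2 <= n)%N ->
  rel_interior n mu ->
  (forall x, simplex n x -> simplex n (phi x)) ->
  respects_blackwell mu phi ->
  {within simplex n, continuous phi} ->
  ((3 <= n)%N ->
     (exists xstar, simplex n xstar /\
        forall x, simplex n x -> phi x = xstar)
     \/ (forall x, simplex n x -> phi x = x))
  /\
  (n = 2%N ->
     exists a b : R, [/\ 0 <= a, a <= b, b <= 1 &
       forall (i : 'I_n), nat_of_ord i = 1%N ->
       forall x, simplex n x ->
         [/\ x ord0 i < a -> phi x ord0 i = a,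
             a <= x ord0 i <= b -> phi x ord0 i = x ord0 i &
             b < x ord0 i -> phi x ord0 i = b]]).
Proof.
move=> n2 Hmu Hphi HB Hc; split.
- move=> n3.
  case: (pselect (exists x0, simplex n x0 /\ phi x0 != x0)) => [[x0 [sx0 nf]]|hne].
    left; exists (phi x0); split; first exact: Hphi.
    exact: (many_const Hmu Hphi HB Hc sx0 nf (y0 := phi x0) (X := x0 - phi x0) erefl erefl n3).
  right => x sx; apply/eqP; case: (boolP (phi x == x)) => // nx.
  by exfalso; apply: hne; exists x.
- move=> _.
  have h1 : (1 < n)%N := n2.
  have h0 : (0 < n)%N := ltnW h1.
  pose i1 := Ordinal h1; pose j := Ordinal h0.
  have hij : i1 != j by apply/eqP => /(congr1 val).
  exists (phi (ev j) ord0 i1), (phi (ev i1) ord0 i1).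
  have [b0 b1 b2] := ab_bounds Hmu Hphi HB Hc hij.
  split => // i hi x sx.
  have -> : i = i1 by apply: val_inj.
  split => h.
  + exact: (claim1 Hmu Hphi HB Hc hij sx h).
  + exact: (claim2 Hmu Hphi HB Hc hij sx h).
  + exact: (claim3 Hmu Hphi HB Hc (i:=i1) sx h).
Qed.
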